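(* Let $m\ge2$, $n\ge1$ and $\mathcal T_{m,n}=\{(a_1:\cdots:a_n): a_i\in\mathbb Z,\ 0\le a_i\le m(n-i+1)-1\}=[0,nm-1]\times[0,(n-1)m-1]\times\cdots\times[0,m-1]$. The map $G(m,1,n)\to\mathcal T_{m,n}$, $w\mapsto \mathrm{Inv}(w)=(\mathrm{inv}_1(w):\cdots:\mathrm{inv}_n(w))$, is a bijection.
   Context: $\varepsilon=e^{2\pi i/m}$; $e_1,\dots,e_n$ the standard basis of $\mathbb C^n$. $G(m,1,n)$ is the group of $n\times n$ monomial matrices whose nonzero entries are $m$-th roots of unity; $w$ is written $w(j)=\varepsilon^{r_j}\beta_j$ ($\beta\in S_n$, $0\le r_j\le m-1$) and acts by $w(e_j)=\varepsilon^{r_j}e_{\beta_j}$. Let $\Phi=\{\varepsilon^ie_j-\varepsilon^ke_l:\varepsilon^ie_j\ne\varepsilon^ke_l,\ 0\le i,k\le m-1,\ 1\le j,l\le n\}$, $\Phi^+=\{\varepsilon^ie_j-\varepsilon^ke_j:0\le i<k\le m-1\}\cup\{e_j-\varepsilon^ke_l:0\le k\le m-1,\ 1\le l<j\le n\}\cup\{\varepsilon^ie_j-\varepsilon^ke_l: 0\le i,k\le m-1,\ k\ne0,\ 1\le j<l\le n\}$, $\Phi^-=\Phi\setminus\Phi^+$. For $i=1,\dots,n$, $\Delta_i=\{e_{n+1-i}-\varepsilon^ke_{n+1-i}:0<k\le m-1\}\cup\{e_{n+1-i}-\varepsilon^ke_j:0\le k\le m-1,\ j<n+1-i\}$ and $\mathrm{inv}_i(w)=|w(\Delta_i)\cap\Phi^-|$.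 *)

(* Defs.v *)
From HB Require Import structures.
From mathcomp Require Import all_boot all_order all_algebra all_fingroup.
Set Implicit Arguments. Unset Strict Implicit. Unset Printing Implicit Defensive.
Import GRing.Theory.

(* Indices are 0-based: the paper's e_j (1 <= j <= n) is e_(j-1), j-1 : 'I_n.
   Exponents of eps = e^(2 pi i/m) live in 'Z_m (we always assume 2 <= m,
   so 'Z_m has exactly m elements 0..m-1 with addition mod m). *)

(* An element w = (beta, r) of G(m,1,n): w(j) = eps^(r_j) beta_j,
   acting by w(e_j) = eps^(r_j) e_(beta_j). *)
Definition Gm1n (m n : nat) := ({perm 'I_n} * {ffun 'I_n -> 'Z_m})%type.

(* The formal symbol eps^i e_j is the pair (i, j). *)
Definition vec (m n : nat) := ('Z_m * 'I_n)%type.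

(* The formal root eps^i e_j - eps^k e_l is the pair ((i,j),(k,l)). *)
Definition root (m n : nat) := (vec m n * vec m n)%type.

Definition act (m n : nat) (w : Gm1n m n) (v : vec m n) : vec m n :=
  ((v.1 + w.2 v.2)%R, w.1 v.2).

Definition act_root (m n : nat) (w : Gm1n m n) (x : root m n) : root m n :=
  (act w x.1, act w x.2).

Definition Phi (m n : nat) : {set root m n} := [set x | x.1 != x.2].

Definition is_pos (m n : nat) (x : root m n) : bool :=
  let: ((i, j), (k, l)) := x in
  [|| (j == l) && (nat_of_ord i < nat_of_ord k)%N,
      (i == 0%R) && (nat_of_ord l < nat_of_ord j)%N
    | (k != 0%R) && (nat_of_ord j < nat_of_ord l)%N].

Definition PhiPos (m n : nat) : {set root m n} := [set x in Phi m n | is_pos x].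

Definition PhiNeg (m n : nat) : {set root m n} := Phi m n :\: PhiPos m n.

Definition Delta_at (m n : nat) (p : 'I_n) : {set root m n} :=
  [set x | (x.1 == (0%R, p)) &&
           (((x.2.2 == p) && (x.2.1 != 0%R)) || (nat_of_ord x.2.2 < nat_of_ord p)%N)].

(* The paper's Delta_i (1 <= i <= n) uses the index n+1-i; with i0 = i-1 : 'I_n
   this is the 0-based index n-1-i0 = rev_ord i0. *)
Definition Delta (m n : nat) (i0 : 'I_n) : {set root m n} := Delta_at m (rev_ord i0).

Definition inv (m n : nat) (w : Gm1n m n) (i0 : 'I_n) : nat :=
  #|[set act_root w x | x in Delta m i0] :&: PhiNeg m n|.

Definition Inv (m n : nat) (w : Gm1n m n) : {ffun 'I_n -> nat} :=
  [ffun i0 => inv w i0].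

(* T_{m,n}: a_(i0) in [0, m(n - i0) - 1] (paper: a_i in [0, m(n-i+1)-1]). *)
Definition in_T (m n : nat) (a : {ffun 'I_n -> nat}) : Prop :=
  forall i0 : 'I_n, (a i0 < m * (n - i0))%N.
Arguments in_T : clear implicits.

(* Main.v *)
Require Import Defs.
From mathcomp Require Import all_boot all_order all_algebra all_fingroup.
From mathcomp Require Import zify.
Set Implicit Arguments. Unset Strict Implicit. Unset Printing Implicit Defensive.
Import GRing.Theory.


Lemma sum_nat_lt (N v : nat) : \sum_(0 <= i < N) (i < v : nat) = minn N v.
Proof.
elim: N => [|N IH]; first by rewrite big_geq // min0n.
rewrite big_nat_recr //= IH; case: ltnP => H; lia.
Qed.

Lemma sum_ord_lt (N v : nat) : v <= N -> \sum_(x : 'I_N) (x < v : nat) = v.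
Proof.
move=> H; rewrite -(big_mkord xpredT (fun i => (i < v : nat))) sum_nat_lt; lia.
Qed.

Lemma sum_split3 n (p : 'I_n) (F : 'I_n -> nat) :
  \sum_(l : 'I_n) F l = \sum_(l : 'I_n | l < p) F l + F p + \sum_(l : 'I_n | p < l) F l.
Proof.
rewrite (bigD1 p) //= (bigID (fun l : 'I_n => l < p)) /= addnA [F p + _]addnC.
congr (_ + _ + _); apply: eq_bigl => l.
  by case: (ltnP l p) => H; rewrite ?andbT ?andbF //; apply/eqP => E; move: H; rewrite E ltnn.
rewrite -leqNgt; apply/idP/idP.
  by case/andP => /eqP H1 H2; rewrite ltn_neqAle H2 andbT; apply/eqP => E; apply: H1; apply: val_inj.
by move=> H; rewrite ltnW ?andbT //; apply/eqP => E; move: H; rewrite E ltnn.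
Qed.

Lemma card_Gm1n m n : 1 < m -> #|{: Gm1n m n}| = n`! * m ^ n.
Proof.
move=> hm; rewrite card_prod card_Sn card_ffun !card_ord Zp_cast //; lia.
Qed.

Section Main.
Variables (m n : nat) (hm : 1 < m).
Implicit Type w : Gm1n m n.

Lemma is_posE (i k : 'Z_m) (j l : 'I_n) : is_pos ((i, j), (k, l)) =
  [|| (j == l) && (nat_of_ord i < nat_of_ord k)%N,
      (i == 0%R) && (nat_of_ord l < nat_of_ord j)%N
    | (k != 0%R) && (nat_of_ord j < nat_of_ord l)%N].
Proof. by []. Qed.

Lemma actE w (i : 'Z_m) (j : 'I_n) : Defs.act w (i, j) = ((i + w.2 j)%R, w.1 j).
Proof. by []. Qed.

Lemma PhiNegE (x : Defs.root m n) : (x \in PhiNeg m n) = (x.1 != x.2) && ~~ is_pos x.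
Proof. by rewrite !inE; case: (x.1 != x.2); rewrite ?andbT ?andbF. Qed.

Lemma DeltaE (p : 'I_n) (x : Defs.root m n) : (x \in Delta_at m p) =
  (x.1 == (0%R, p)) && (((x.2.2 == p) && (x.2.1 != 0%R)) || (nat_of_ord x.2.2 < nat_of_ord p)%N).
Proof. by rewrite inE. Qed.

Definition Fw w (p : 'I_n) (y : vec m n) : nat :=
  (((0%R, p), y) \in Delta_at m p) && (act_root w ((0%R, p), y) \in PhiNeg m n).

Lemma FwE w p (k : 'Z_m) (l : 'I_n) : Fw w p (k, l) =
  (((l == p) && (k != 0%R)) || (nat_of_ord l < nat_of_ord p)%N) &&
  (((w.2 p, w.1 p) != ((k + w.2 l)%R, w.1 l)) &&
   ~~ [|| (w.1 p == w.1 l) && (nat_of_ord (w.2 p) < nat_of_ord (k + w.2 l)%R)%N,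
      (w.2 p == 0%R) && (nat_of_ord (w.1 l) < nat_of_ord (w.1 p))%N
    | ((k + w.2 l)%R != 0%R) && (nat_of_ord (w.1 p) < nat_of_ord (w.1 l))%N]).
Proof. by rewrite /Fw DeltaE PhiNegE /act_root !actE add0r is_posE eqxx. Qed.

Lemma Fw_gt w (p : 'I_n) (k : 'Z_m) (l : 'I_n) : p < l -> Fw w p (k, l) = 0.
Proof.
move=> H; rewrite FwE.
have -> : (l == p) = false by apply/negbTE; apply/eqP => E; move: H; rewrite E ltnn.
by rewrite [l < p]ltnNge (ltnW H).
Qed.

Lemma Fw_eq w (p : 'I_n) (k : 'Z_m) : Fw w p (k, p) = ((k != 0%R) && ~~ (nat_of_ord (w.2 p) < nat_of_ord (k + w.2 p)%R)%N : nat).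
Proof.
rewrite FwE !eqxx !ltnn !andbF !orbF !andTb.
rewrite xpair_eqE eqxx andbT.
case: (eqVneq k 0%R) => [->|Hk]; first by rewrite add0r eqxx.
have -> : (w.2 p == (k + w.2 p)%R) = false.
  by apply/negbTE; apply: contra Hk => /eqP E; rewrite -(subrr (w.2 p)) {1}E addrK.
by [].
Qed.

Lemma Fw_lt w (p : 'I_n) (k : 'Z_m) (l : 'I_n) : l < p ->
  Fw w p (k, l) = if w.1 l < w.1 p then (w.2 p != 0%R : nat) else ((k + w.2 l)%R == 0%R : nat).
Proof.
move=> H; rewrite FwE H orbT /=.
have Hne : (w.1 p == w.1 l) = false.
  apply/negbTE; apply/eqP => /perm_inj E; move: H; rewrite E ltnn //.
rewrite xpair_eqE Hne andbF /=.
case: (ltngtP (w.1 l) (w.1 p)) => H1.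
- by rewrite andbT andbF orbF.
- by rewrite andbF andbT orFb negbK.
- by move: Hne; rewrite (val_inj H1) eqxx.
Qed.

Lemma card_Zm : #|{: 'Z_m}| = m.
Proof. by rewrite card_ord Zp_cast. Qed.

Lemma sum_Fw_eq w p : \sum_(k : 'Z_m) Fw w p (k, p) = w.2 p.
Proof.
rewrite (reindex_inj (h := fun c : 'Z_m => (c - w.2 p)%R) (addIr _)) /=.
under eq_bigr => c _ do rewrite Fw_eq subrK subr_eq0.
rewrite -[RHS](sum_ord_lt (ltnW (ltn_ord (w.2 p)))).
apply: eq_bigr => c _.
case: (ltngtP c (w.2 p)) => H /=.
- by rewrite andbT; case: eqVneq H => // ->; rewrite ltnn.
- by rewrite andbF.
- by rewrite (val_inj H) eqxx.
Qed.

Lemma sum_Fw_lt w (p l : 'I_n) : l < p -> \sum_(k : 'Z_m) Fw w p (k, l) =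
  if w.1 l < w.1 p then (w.2 p != 0%R) * m else 1.
Proof.
move=> H; case: ifP => H1.
  under eq_bigr => k _ do rewrite Fw_lt // H1.
  by rewrite sum_nat_const card_Zm mulnC.
under eq_bigr => k _ do rewrite Fw_lt // H1.
rewrite (reindex_inj (h := fun c : 'Z_m => (c - w.2 l)%R) (addIr _)) /=.
under eq_bigr => c _ do rewrite subrK.
rewrite (bigD1 0%R) // big1 //=.
by move=> c /negbTE ->.
Qed.

Definition clt w (p : 'I_n) := \sum_(l : 'I_n | l < p) (w.1 l < w.1 p : nat).
Definition cgt w (p : 'I_n) := \sum_(l : 'I_n | l < p) (w.1 p < w.1 l : nat).

Lemma act_root_inj w : injective (act_root w).
Proof.
move=> [[i j] [k l]] [[i' j'] [k' l']]; rewrite /act_root !actE.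
case => E1 /perm_inj E2 E3 /perm_inj E4; subst j' l'.
have F1 : (i + w.2 j)%R = (i' + w.2 j)%R :> 'Z_m by apply: val_inj.
have F3 : (k + w.2 l)%R = (k' + w.2 l)%R :> 'Z_m by apply: val_inj.
by rewrite (addIr _ F1) (addIr _ F3).
Qed.

Lemma card_sum (T : finType) (P : pred T) : #|[set x | P x]| = \sum_x (P x : nat).
Proof. by rewrite -sum1dep_card big_mkcond; apply: eq_bigr => x _; case: (P x). Qed.

Lemma invp_formula w (p : 'I_n) :
  #|[set act_root w x | x in Delta_at m p] :&: PhiNeg m n| =
  w.2 p + cgt w p + (w.2 p != 0%R) * m * clt w p.
Proof.
have -> : [set act_root w x | x in Delta_at m p] :&: PhiNeg m n =
   act_root w @: [set x | (x \in Delta_at m p) && (act_root w x \in PhiNeg m n)].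
  apply/setP => y; rewrite in_setI; apply/andP/imsetP.
    by case=> /imsetP[x Dx ->] Bx; exists x; rewrite // in_set Dx Bx.
  by case=> x; rewrite in_set => /andP[Dx Bx] ->; split => //; apply: imset_f.
rewrite card_imset; last exact: act_root_inj.
rewrite card_sum.
transitivity (\sum_(x1 : vec m n) \sum_(x2 : vec m n) ((((x1, x2) : Defs.root m n) \in Delta_at m p) && (act_root w (x1, x2) \in PhiNeg m n) : nat)).
  by rewrite pair_bigA; apply: eq_bigr => -[x1 x2] _.
rewrite (bigD1 (0%R, p)) //= [X in _ + X]big1 ?addn0; last first.
  by move=> x1 Hx1; apply: big1 => x2 _; rewrite DeltaE /= (negbTE Hx1).
transitivity (\sum_(k : 'Z_m) \sum_(l : 'I_n) Fw w p (k, l)).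
  by rewrite pair_bigA; apply: eq_bigr => -[k l] _.
rewrite exchange_big /=.
rewrite (sum_split3 p) sum_Fw_eq [X in _ + X]big1 ?addn0; last by move=> l Hl; apply: big1 => k _; rewrite Fw_gt.
under eq_bigr => l Hl do rewrite sum_Fw_lt //.
rewrite /cgt /clt big_distrr /= -addnA -big_split /= addnC.
congr (_ + _); apply: eq_bigr => l Hl.
case: (ltngtP (w.1 l) (w.1 p)) => H.
- by rewrite muln1.
- by rewrite muln0.
- by move: Hl; rewrite (perm_inj (val_inj H)) ltnn.
Qed.

Lemma clt_cgt w (p : 'I_n) : clt w p + cgt w p = p.
Proof.
rewrite /clt /cgt -big_split /=.
rewrite -[RHS](sum_ord_lt (ltnW (ltn_ord p))) big_mkcond /=.
apply: eq_bigr => l _; case: ifP => Hl //.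
case: (ltngtP (w.1 l) (w.1 p)) => H //.
by move: Hl; rewrite (perm_inj (val_inj H)) ltnn.
Qed.

Lemma Zm_lt (x : 'Z_m) : (x : nat) < m.
Proof. by case: x => x /=; rewrite Zp_cast. Qed.

Lemma inv_formula w (i0 : 'I_n) :
  Defs.inv w i0 = w.2 (rev_ord i0) + cgt w (rev_ord i0) + (w.2 (rev_ord i0) != 0%R) * m * clt w (rev_ord i0).
Proof. exact: invp_formula. Qed.

Lemma inv_lt w (i0 : 'I_n) : Defs.inv w i0 < m * (n - i0).
Proof.
rewrite inv_formula.
have := clt_cgt w (rev_ord i0); have := Zm_lt (w.2 (rev_ord i0)).
move: (w.2 (rev_ord i0)) (clt w (rev_ord i0)) (cgt w (rev_ord i0)) => r a b.
have := ltn_ord i0.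
case: (eqVneq r 0%R) => [->|Hr] /=.
  rewrite mul0n addn0; nia.
rewrite mul1n; nia.
Qed.
End Main.

Lemma arith_inj (m p r r' cg cl cg' cl' : nat) : 1 < m -> r < m -> r' < m ->
  cl + cg = p -> cl' + cg' = p ->
  r + cg + (r != 0) * m * cl = r' + cg' + (r' != 0) * m * cl' -> r = r' /\ cl = cl'.
Proof.
move=> hm hr hr' e1 e2.
case: r hr => [|r] hr; case: r' hr' => [|r'] hr' /=; rewrite ?mul0n ?mul1n ?addn0.
- lia.
- nia.
- nia.
move=> E.
suff ecl : cl = cl' by subst cl'; nia.
have key : forall a b c d x y, 1 < m -> 0 < a -> b < m -> c + x = d + y ->
   a + x + m * c = b + y + m * d -> c <= d.
  move=> a b c d x y h1 h2 h2' h3 h4; case: (leqP c d) => // H.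
  have E1 : m * c = m * (d + (c - d - 1) + 1) by congr (m * _); lia.
  rewrite !mulnDr muln1 in E1.
  have E3 : c - d - 1 <= m * (c - d - 1) by apply: leq_pmull; lia.
  lia.
apply/eqP; rewrite eqn_leq; apply/andP; split.
  by apply: (key r.+1 r'.+1 cl cl' cg cg') => //; lia.
by apply: (key r'.+1 r.+1 cl' cl cg' cg) => //; lia.
Qed.


Section Lehmer.
Variable n : nat.

Lemma sum_perm_lt (b : {perm 'I_n}) u : u <= n -> \sum_(l : 'I_n) (b l < u : nat) = u.
Proof.
move=> H; rewrite -[RHS](sum_ord_lt H).
by rewrite [RHS](reindex_inj (h := b) (@perm_inj _ b)).
Qed.

Lemma lehmer_lt (b b' : {perm 'I_n}) (p : 'I_n) : (forall l : 'I_n, p < l -> b l = b' l) ->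
  \sum_(l : 'I_n | l < p) (b l < b p : nat) = \sum_(l : 'I_n | l < p) (b' l < b' p : nat) ->
  b p < b' p -> False.
Proof.
move=> Hgt Hq Hlt.
have h1 := sum_perm_lt b' (ltnW (ltn_ord (b' p))).
rewrite (sum_split3 p) ltnn addn0 in h1.
have h2 := sum_perm_lt b (ltnW (ltn_ord (b' p))).
rewrite (sum_split3 p) Hlt in h2.
have h3 : \sum_(l : 'I_n | p < l) (b' l < b' p : nat) = \sum_(l : 'I_n | p < l) (b l < b' p : nat).
  by apply: eq_bigr => l Hl; rewrite Hgt.
have h4 : \sum_(l : 'I_n | l < p) (b l < b p : nat) <= \sum_(l : 'I_n | l < p) (b l < b' p : nat).
  by apply: leq_sum => l _; case: (ltnP (b l) (b p)) => // H; rewrite (ltn_trans H Hlt).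
lia.
Qed.

Lemma lehmer (b b' : {perm 'I_n}) :
  (forall p : 'I_n, \sum_(l : 'I_n | l < p) (b l < b p : nat) = \sum_(l : 'I_n | l < p) (b' l < b' p : nat)) ->
  b = b'.
Proof.
move=> H; apply/permP.
suff S : forall k (p : 'I_n), n - p <= k -> b p = b' p by move=> p; apply: (S n); lia.
elim=> [|k IH] p Hp.
  by exfalso; move: (ltn_ord p) Hp; lia.
case: (ltngtP (b p) (b' p)) => Hc.
- by exfalso; apply: (lehmer_lt (b := b) (b' := b') (p := p)) => // l Hl; apply: IH; lia.
- exfalso; apply: (lehmer_lt (b := b') (b' := b) (p := p)) => //.
  by move=> l Hl; symmetry; apply: IH; lia.
- exact: val_inj.
Qed.
End Lehmer.

Lemma fact_rev n : \prod_(i < n) (n - i) = n`!.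
Proof.
rewrite fact_prod big_add1 /= big_rev_mkord subn0.
by apply: eq_bigr => i _; move: (ltn_ord i); lia.
Qed.

Lemma card_ord_lt N v : v <= N -> #|[pred k : 'I_N | k < v]| = v.
Proof.
move=> H; rewrite -sum1_card big_mkcond /= -[RHS](sum_ord_lt H).
by apply: eq_bigr => i _; rewrite inE; case: (i < v).
Qed.

Section Final.
Variables (m n : nat) (hm : 1 < m).

Lemma nzE (x : 'Z_m) : (x != 0%R) = (nat_of_ord x != 0).
Proof. by rewrite -val_eqE. Qed.

Lemma Inv_inj : injective (@Inv m n).
Proof.
move=> [b r] [b' r'] H.
have E p : r p = r' p /\ clt (b, r) p = clt (b', r') p.
  have := congr1 (fun f : {ffun 'I_n -> nat} => f (rev_ord p)) H; rewrite /= !ffunE !inv_formula // rev_ordK => E.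
  rewrite !nzE in E.
  have [E1 E2] := arith_inj hm (Zm_lt hm (r p)) (Zm_lt hm (r' p)) (clt_cgt (b, r) p) (clt_cgt (b', r') p) E.
  by split => //; apply: val_inj.
have -> : r = r' by apply/ffunP => p; case: (E p).
have -> // : b = b'.
by apply: lehmer => p; case: (E p).
Qed.

Lemma Inv_ltN (w : Gm1n m n) (i : 'I_n) : Defs.inv w i < m * n.
Proof. by apply: leq_trans (inv_lt hm w i) _; rewrite leq_mul2l leq_subr orbT. Qed.

Definition InvO (w : Gm1n m n) : {ffun 'I_n -> 'I_(m * n)} :=
  [ffun i => Ordinal (Inv_ltN w i)].

Lemma InvO_inj : injective InvO.
Proof.
move=> w w' H; apply: Inv_inj; apply/ffunP => i.
by have := congr1 (fun f : {ffun 'I_n -> 'I_(m * n)} => nat_of_ord (f i)) H; rewrite !ffunE.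
Qed.

Definition Tset := [set f : {ffun 'I_n -> 'I_(m * n)} | [forall i, (f i : nat) < m * (n - i)]].

Lemma card_Tset : #|Tset| = n`! * m ^ n.
Proof.
rewrite (eq_card (B := family (fun i : 'I_n => [pred k : 'I_(m * n) | k < m * (n - i)]))); last first.
  move=> f; rewrite inE; apply/forallP/familyP => H i; have := H i; by rewrite inE.
rewrite card_family foldrE big_map big_enum /=.
transitivity (\prod_(i in 'I_n) (m * (n - i))).
  apply: eq_bigr => i _; rewrite -[RHS](@card_ord_lt (m * n) (m * (n - i))); first by apply: eq_card => x; rewrite !inE.
  by rewrite leq_mul2l leq_subr orbT.
rewrite big_split /= prod_nat_const card_ord mulnC; congr (_ * _).
by rewrite -fact_rev; apply: eq_bigl => i.
Qed.
End Final.

Theorem proposition4p1 (m n : nat) (hm : (2 <= m)%N) (hn : (1 <= n)%N) :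
  (forall w : Gm1n m n, in_T m n (Inv w)) /\
  (forall a : {ffun 'I_n -> nat}, in_T m n a -> exists! w : Gm1n m n, Inv w = a).
Proof.
split.
  by move=> w i0; rewrite /Inv ffunE; exact: inv_lt.
move=> a Ha.
have Ha' i : a i < m * n by apply: leq_trans (Ha i) _; rewrite leq_mul2l leq_subr orbT.
pose a' : {ffun 'I_n -> 'I_(m * n)} := [ffun i => Ordinal (Ha' i)].
have : a' \in InvO hm @: setT.
  have /eqP -> : InvO hm @: setT == Tset m n.
    rewrite eqEcard card_imset; last exact: InvO_inj.
    rewrite cardsT card_Gm1n // card_Tset leqnn andbT.
    apply/subsetP => f /imsetP[w _ ->]; rewrite inE; apply/forallP => i; rewrite ffunE /=.
    exact: inv_lt.
  by rewrite inE; apply/forallP => i; rewrite ffunE; exact: Ha.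
case/imsetP => w _ Hw.
have Hwa : Inv w = a.
  apply/ffunP => i.
  by have := congr1 (fun f : {ffun 'I_n -> 'I_(m * n)} => nat_of_ord (f i)) Hw; rewrite !ffunE.
exists w; split => // w' Hw'.
by apply: (Inv_inj hm); rewrite Hwa Hw'.
Qed.
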